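(* Let $d\ge2$, $y_1,y_2\in\mathbb{S}^{d-1}$ and $0<r_1,r_2<\frac12$. For $i=1,2$ let $B_i$ be the open ball of radius $r_i$ centered at $(1-r_i)y_i$ (internally tangent to $\mathbb{S}^{d-1}$ at $y_i$). If $x\in B_1$ and $x\notin B_2$, then $$\frac{|x-y_1|}{|x-y_2|}\ \le\ \left(\frac{r_1}{r_2}\cdot\frac{1-r_2}{1-r_1}\right)^{1/2}.$$
   Context: $\mathbb{S}^{d-1}$ is the unit sphere of $\mathbb R^d$; $|\cdot|$ is the Euclidean norm. *)

(* Defs.v *)
From mathcomp Require Import all_boot all_order all_algebra.
Set Implicit Arguments. Unset Strict Implicit. Unset Printing Implicit Defensive.
Import Order.TTheory GRing.Theory Num.Theory.
Local Open Scope ring_scope.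

Definition dotv (R : rcfType) (d : nat) (u v : 'rV[R]_d) : R :=
  \sum_(i < d) u ord0 i * v ord0 i.
Definition enorm (R : rcfType) (d : nat) (u : 'rV[R]_d) : R :=
  Num.sqrt (dotv u u).

Definition in_open_ball (R : rcfType) (d : nat) (c : 'rV[R]_d) (r : R) (x : 'rV[R]_d) : Prop :=
  enorm (x - c) < r.

(* Main.v *)
Require Import Defs.
From mathcomp Require Import all_boot all_order all_algebra.
From mathcomp Require Import ring lra.
Import Order.TTheory GRing.Theory Num.Theory.
Local Open Scope ring_scope.

Section H.
Context {R : rcfType} {d : nat}.
Implicit Types u v w : 'rV[R]_d.

Lemma dotvDl u v w : dotv (u + v) w = dotv u w + dotv v w.
Proof. rewrite /dotv -big_split /=; apply: eq_bigr => i _; rewrite !mxE; ring. Qed.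
Lemma dotvNl u w : dotv (- u) w = - dotv u w.
Proof. rewrite /dotv -sumrN; apply: eq_bigr => i _; rewrite !mxE; ring. Qed.
Lemma dotvZl k u w : dotv (k *: u) w = k * dotv u w.
Proof. rewrite /dotv mulr_sumr; apply: eq_bigr => i _; rewrite !mxE; ring. Qed.
Lemma dotvC u w : dotv u w = dotv w u.
Proof. rewrite /dotv; apply: eq_bigr => i _; ring. Qed.
Lemma dotv_ge0 u : 0 <= dotv u u.
Proof. rewrite /dotv; apply: sumr_ge0 => i _; by rewrite -expr2 sqr_ge0. Qed.
Lemma dotvDr u v w : dotv w (u + v) = dotv w u + dotv w v.
Proof. by rewrite dotvC dotvDl !(dotvC w). Qed.
Lemma dotvNr u w : dotv w (- u) = - dotv w u.
Proof. by rewrite dotvC dotvNl dotvC. Qed.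
Lemma dotvZr k u w : dotv w (k *: u) = k * dotv w u.
Proof. by rewrite dotvC dotvZl dotvC. Qed.
Lemma enorm2 u : enorm u ^+ 2 = dotv u u.
Proof. by rewrite /enorm sqr_sqrtr // dotv_ge0. Qed.
End H.

Theorem lemma2p3 (R : rcfType) (d : nat) (hd : (2 <= d)%N)
  (y1 y2 x : 'rV[R]_d) (r1 r2 : R)
  (hy1 : enorm y1 = 1) (hy2 : enorm y2 = 1)
  (hr1 : 0 < r1) (hr1' : r1 < 1 / 2) (hr2 : 0 < r2) (hr2' : r2 < 1 / 2)
  (hx1 : in_open_ball ((1 - r1) *: y1) r1 x)
  (hx2 : ~ in_open_ball ((1 - r2) *: y2) r2 x) :
  enorm (x - y1) / enorm (x - y2) <= Num.sqrt (r1 / r2 * ((1 - r2) / (1 - r1))).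
Proof.
move: hx1 hx2; rewrite /in_open_ball => hx1 /negP; rewrite -leNgt => hx2.
have q1 : dotv y1 y1 = 1 by rewrite -enorm2 hy1 expr1n.
have q2 : dotv y2 y2 = 1 by rewrite -enorm2 hy2 expr1n.
have E1 := enorm2 (x - (1 - r1) *: y1).
have E2 := enorm2 (x - (1 - r2) *: y2).
rewrite !(dotvDl, dotvDr, dotvNl, dotvNr, dotvZl, dotvZr) q1 q2 in E1 E2.
rewrite (dotvC y1 x) (dotvC y2 x) in E1 E2.
have F1 := enorm2 (x - y1).
have F2 := enorm2 (x - y2).
rewrite !(dotvDl, dotvDr, dotvNl, dotvNr) q1 q2 (dotvC y1 x) (dotvC y2 x) in F1 F2.
have g1 : 0 <= enorm (x - (1 - r1) *: y1) by rewrite /enorm sqrtr_ge0.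
set a := dotv x x in E1 E2 F1 F2.
set b1 := dotv x y1 in E1 F1.
set b2 := dotv x y2 in E2 F2.
set n1 := enorm (x - (1 - r1) *: y1) in E1 hx1 g1.
set n2 := enorm (x - (1 - r2) *: y2) in E2 hx2.
set m1 := enorm (x - y1) in F1 *.
set m2 := enorm (x - y2) in F2 *.
have m1ge : 0 <= m1 by rewrite /m1 /enorm sqrtr_ge0.
have m2ge : 0 <= m2 by rewrite /m2 /enorm sqrtr_ge0.
have h1 : (1 - r1) * m1 ^+ 2 < r1 * (1 - a) by nra.
have h2 : r2 * (1 - a) <= (1 - r2) * m2 ^+ 2 by nra.
have m2p : 0 < m2.
  have ha : 0 < r1 * (1 - a) by have := sqr_ge0 m1; nra.
  have ha' : 0 < 1 - a by rewrite -(pmulr_rgt0 _ hr1).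
  have : 0 < m2 ^+ 2 by have := mulr_gt0 hr2 ha'; nra.
  move=> h; nra.
set K := r1 / r2 * ((1 - r2) / (1 - r1)).
have K0 : 0 <= K.
  rewrite /K; apply: mulr_ge0; apply: mulr_ge0; rewrite ?invr_ge0; lra.
rewrite ler_pdivrMr //.
have -> : m1 = Num.sqrt (m1 ^+ 2) by rewrite sqrtr_sqr ger0_norm.
have -> : m2 = Num.sqrt (m2 ^+ 2) by rewrite sqrtr_sqr ger0_norm.
rewrite -sqrtrM // ler_sqrt; last exact: mulr_ge0 K0 (sqr_ge0 _).
have -> : K * m2 ^+ 2 = (r1 * ((1 - r2) * m2 ^+ 2)) / (r2 * (1 - r1)).
  rewrite /K; field; apply/andP; split; lra.
rewrite ler_pdivlMr; last by apply: mulr_gt0; lra.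
have A : r2 * ((1 - r1) * m1 ^+ 2) <= r2 * (r1 * (1 - a)).
  by rewrite ler_pM2l // ltW.
have B : r1 * (r2 * (1 - a)) <= r1 * ((1 - r2) * m2 ^+ 2).
  by rewrite ler_pM2l.
have E : m1 ^+ 2 * (r2 * (1 - r1)) = r2 * ((1 - r1) * m1 ^+ 2) by ring.
have E' : r1 * (r2 * (1 - a)) = r2 * (r1 * (1 - a)) by ring.
rewrite E; apply: le_trans A _; rewrite -E'; exact: B.
Qed.
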